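(* Let $A$ be a nontrivial commutative ring. The following conditions are equivalent: (a) $A$ is sublocalizable. (b) $1 + A^\times \subseteq A^\times \cup J(A)$. (c) $A^\times \cup J(A)$ is a subring of $A$. (d) There exists a proper ideal $I$ of $A$ such that $A^\times \cup I$ is a subring of $A$. (e) $J(A)$ is the unique proper ideal $I$ of $A$ such that $A^\times \cup I$ is a subring of $A$. (f) $B\setminus A^\times$ is an ideal of $A$ for some subring $B$ of $A$ containing $A^\times$ (in which case $B = A^\times \cup J(A)$ and $B\setminus A^\times = J(A)$ are unique). (g) $A^\times \cup J(A)$ is a local subring of $A$ (with maximal ideal $J(A)$ and having the same units as $A$). (h) $A$ has a (unique) local subring with maximal ideal $J(A)$ and having the same units as $A$. (i) $A$ has a (unique) local subring whose maximal ideal is also an ideal of $A$ and whose units are the same as those of $A$. (j) $A$ has a (unique) local subring $B$ with $B^\times = A^\times$ and $J(B) = J(A)$. (k) $A/J(A)$ is sublocalizable. (l) $A/J(A)$ is unit-additive.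
   Context: $A^\times$ is the unit group and $J(A)$ the Jacobson radical of $A$; $1+A^\times=\{1+u\mid u\in A^\times\}$ and $A^\times+A^\times=\{u+v\mid u,v\in A^\times\}$. A commutative ring $A$ is sublocalizable if it is nontrivial and $A^\times+A^\times\subseteq A^\times\cup J(A)$. A commutative ring is unit-additive if for all units $u,v$, $u+v$ is a unit or nilpotent. *)

(* Defs.v *)
From HB Require Import structures.
From mathcomp Require Import all_boot all_order all_algebra.
Set Implicit Arguments. Unset Strict Implicit. Unset Printing Implicit Defensive.
Import GRing.Theory.
Local Open Scope ring_scope.

(* Subsets of a commutative ring are Prop-valued predicates R -> Prop.
   All notions are defined relative to a subset S (meant to be a subring),
   so that they apply both to A itself (S = whole) and to subrings of A. *)
Section Defs.
Variable R : comNzRingType.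

Definition whole : R -> Prop := fun _ => True.
Definition sunion (P Q : R -> Prop) : R -> Prop := fun x => P x \/ Q x.
Definition sameset (P Q : R -> Prop) : Prop := forall x, P x <-> Q x.

Definition subring (S : R -> Prop) : Prop :=
  [/\ S 1, (forall x y, S x -> S y -> S (x - y)) & (forall x y, S x -> S y -> S (x * y))].

Definition ideal_of (S I : R -> Prop) : Prop :=
  [/\ (forall x, I x -> S x), I 0, (forall x y, I x -> I y -> I (x + y))
    & (forall r x, S r -> I x -> I (r * x))].

Definition proper_ideal_of (S I : R -> Prop) : Prop := ideal_of S I /\ ~ I 1.

Definition maximal_ideal_of (S M : R -> Prop) : Prop :=
  proper_ideal_of S M /\
  forall I, proper_ideal_of S I -> (forall x, M x -> I x) -> forall x, I x -> M x.

Definition jacobson_of (S : R -> Prop) (x : R) : Prop :=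
  S x /\ forall M, maximal_ideal_of S M -> M x.

Definition unit_of (S : R -> Prop) (x : R) : Prop :=
  S x /\ exists y, S y /\ x * y = 1.

Definition local_subring (S : R -> Prop) : Prop :=
  subring S /\ exists M, maximal_ideal_of S M /\
    forall M', maximal_ideal_of S M' -> sameset M' M.

Definition units : R -> Prop := unit_of whole.
Definition jacobson : R -> Prop := jacobson_of whole.

Definition nilpotent (x : R) : Prop := exists n : nat, x ^+ n = 0.

Definition sublocalizable : Prop :=
  (1 : R) != 0 /\
  forall u v, units u -> units v -> units (u + v) \/ jacobson (u + v).

Definition unit_additive : Prop :=
  forall u v, units u -> units v -> units (u + v) \/ nilpotent (u + v).

Definition f_prop (B : R -> Prop) : Prop :=
  [/\ subring B, (forall x, units x -> B x)
    & ideal_of whole (fun x => B x /\ ~ units x)].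

Definition h_prop (B : R -> Prop) : Prop :=
  [/\ local_subring B, maximal_ideal_of B jacobson & sameset (unit_of B) units].

Definition i_prop (B : R -> Prop) : Prop :=
  [/\ local_subring B,
      (exists M, maximal_ideal_of B M /\ ideal_of whole M)
    & sameset (unit_of B) units].

Definition j_prop (B : R -> Prop) : Prop :=
  [/\ local_subring B, sameset (unit_of B) units & sameset (jacobson_of B) jacobson].

End Defs.

Definition is_quotient_by_jacobson (A B : comNzRingType) (f : {rmorphism A -> B}) : Prop :=
  (forall b, exists a, f a = b) /\ (forall a, f a = 0 <-> jacobson a).

(* Main.v *)
Require Import Defs.
From HB Require Import structures.
From mathcomp Require Import all_boot all_order all_algebra.
From mathcomp Require Import boolp ring_quotient generic_quotient.
From mathcomp Require classical_sets.
Set Implicit Arguments. Unset Strict Implicit. Unset Printing Implicit Defensive.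
Import GRing.Theory.
Local Open Scope ring_scope.

Section Ring.
Variable R : comNzRingType.
Implicit Types (S I M : R -> Prop) (x y : R).

Local Notation U := (@units R).
Local Notation J := (@jacobson R).

Lemma unitsE x : U x <-> exists y, x * y = 1.
Proof. by split => [[_ [y [_ h]]]|[y h]]; [exists y | split=> //; exists y]. Qed.

Lemma units1 : U 1.
Proof. by apply/unitsE; exists 1; rewrite mulr1. Qed.

Lemma unitsM x y : U x -> U y -> U (x * y).
Proof.
move=> /unitsE[a ha] /unitsE[b hb]; apply/unitsE; exists (a * b).
by rewrite mulrACA ha hb mulr1.
Qed.

Lemma unitsN x : U x -> U (- x).
Proof. by move=> /unitsE[a ha]; apply/unitsE; exists (- a); rewrite mulrNN. Qed.

Lemma units_factor x y : U (x * y) -> U x.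
Proof. by move=> /unitsE[a ha]; apply/unitsE; exists (y * a); rewrite mulrA. Qed.

Lemma units_inv x : U x -> exists y, U y /\ x * y = 1.
Proof.
move=> /unitsE[a ha]; exists a; split => //; apply/unitsE; exists x.
by rewrite mulrC.
Qed.

Lemma subring0 S : subring S -> S 0.
Proof. by case=> S1 SB _; rewrite -(subrr 1); apply: SB. Qed.

Lemma subringN S x : subring S -> S x -> S (- x).
Proof. move=> sS Sx; rewrite -sub0r; case: (sS) => _ SB _; apply: SB => //; exact: subring0. Qed.

Lemma subringD S x y : subring S -> S x -> S y -> S (x + y).
Proof. move=> sS Sx Sy; rewrite -[y]opprK; case: (sS) => _ SB _; apply: SB => //; exact: subringN. Qed.

Lemma subring_ext S S' : sameset S S' -> subring S -> subring S'.
Proof.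
move=> E [S1 SB SM]; split.
- exact/E.
- by move=> x y /E Sx /E Sy; apply/E; apply: SB.
- by move=> x y /E Sx /E Sy; apply/E; apply: SM.
Qed.

Lemma ideal_ext S I I' : sameset I I' -> ideal_of S I -> ideal_of S I'.
Proof.
move=> E [IS I0 ID IM]; split.
- by move=> x /E; apply: IS.
- exact/E.
- by move=> x y /E Ix /E Iy; apply/E; apply: ID.
- by move=> r x Sr /E Ix; apply/E; apply: IM.
Qed.

Lemma ideal_unit S I x : ideal_of S I -> I x -> unit_of S x -> I 1.
Proof.
move=> [_ _ _ IM] Ix [_ [y [Sy h]]]; rewrite -h mulrC; exact: IM.
Qed.

Lemma max_ideal_exists S I : proper_ideal_of S I ->
  exists M, maximal_ideal_of S M /\ (forall x, I x -> M x).
Proof.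
move=> PI.
pose P := fun X : R -> Prop => (forall x, ~ X x) \/
   (proper_ideal_of S X /\ forall x, I x -> X x).
have PX X x : P X -> X x -> proper_ideal_of S X /\ forall x, I x -> X x.
  by case=> [h Xx|//]; case: (h x Xx).
have [M [PM Mmax]] : exists M, P M /\ forall B, classical_sets.proper M B -> ~ P B.
  apply: classical_sets.Zorn_bigcup => F FP Ftot.
  case: (EM (exists X, F X /\ exists x, X x)) => [[X0 [FX0 [x0 X0x0]]]|nE]; last first.
    by left=> x [X FX Xx]; apply: nE; exists X; split => //; exists x.
  have [[[_ X00 _ _] _] IX0] := PX _ _ (FP _ FX0) X0x0.
  right; split; [split; [split|]|].
  - move=> x [X FX Xx]; have [[[XS _ _ _] _] _] := PX _ _ (FP _ FX) Xx; exact: XS.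
  - by exists X0.
  - move=> x y [X FX Xx] [Y FY Yy].
    case: (Ftot _ _ FX FY) => [XY|YX].
    + have Yx := XY _ Xx; have [[[_ _ YD _] _] _] := PX _ _ (FP _ FY) Yx.
      by exists Y => //; apply: YD.
    + have Xy := YX _ Yy; have [[[_ _ XD _] _] _] := PX _ _ (FP _ FX) Xx.
      by exists X => //; apply: XD.
  - move=> r x Sr [X FX Xx]; have [[[_ _ _ XM] _] _] := PX _ _ (FP _ FX) Xx.
    by exists X => //; apply: XM.
  - by move=> [X FX X1]; have [[_ /(_ X1)]] := PX _ _ (FP _ FX) X1.
  - by move=> x Ix; exists X0 => //; apply: IX0.
case: PM => [M0|[PM IM]].
  exfalso; apply: (Mmax I); last by right.
  split=> [x /M0 //|h]; case: PI => [[_ I0 _ _] _].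
  exact: (M0 0 (h 0 I0)).
exists M; split => //; split => // I' PI' MI' x I'x.
apply: contrapT => nMx; apply: (Mmax I'); last by right; split => // y /IM /MI'.
by split => // h; apply: nMx; apply: h.
Qed.

Lemma nonunit_max S b : subring S -> S b -> ~ unit_of S b ->
  exists M, maximal_ideal_of S M /\ M b.
Proof.
move=> sS Sb nU.
pose I := fun x => exists2 s, S s & x = s * b.
have PI : proper_ideal_of S I.
  split; [split|].
  - by move=> x [s Ss ->]; case: sS => _ _ SM; apply: SM.
  - by exists 0; [exact: subring0|rewrite mul0r].
  - move=> x y [s Ss ->] [t St ->]; exists (s + t); last by rewrite mulrDl.
    exact: subringD.
  - move=> r x Sr [s Ss ->]; exists (r * s); last by rewrite mulrA.
    by case: sS => _ _ SM; apply: SM.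
  - move=> [s Ss h]; apply: nU; split => //; exists s; split => //.
    by rewrite mulrC h.
have [M [MM IM]] := max_ideal_exists PI; exists M; split => //; apply: IM.
by exists 1; [by case: sS|rewrite mul1r].
Qed.

Lemma subring_whole : subring (@whole R).
Proof. by []. Qed.

Lemma jacP x : J x <-> forall a, U (1 - a * x).
Proof.
split.
  move=> [_ Jx] a; apply: contrapT => nU.
  have [M [MM M1]] := nonunit_max subring_whole I nU.
  have Mx := Jx _ MM; case: MM => [[[_ _ MD MI] M1'] _].
  by apply: M1'; rewrite -(subrK (a * x) 1); apply: MD => //; apply: MI.
move=> h; split => // M [[iM M1] Mmax]; case: (iM) => _ M0 MD MM.
apply: contrapT => nMx.
pose I' := fun y => exists m, exists r, M m /\ y = m + r * x.
have iI' : ideal_of (@whole R) I'.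
  split => //.
  - by exists 0, 0; rewrite mul0r addr0.
  - move=> y z [m [r [Mm ->]]] [m' [r' [Mm' ->]]]; exists (m + m'), (r + r').
    by split; [apply: MD|rewrite mulrDl addrACA].
  - move=> c y _ [m [r [Mm ->]]]; exists (c * m), (c * r).
    by split; [apply: MM|rewrite mulrDr mulrA].
case: (EM (I' 1)) => [[m [r [Mm E]]]|n1].
  apply: M1; apply: (ideal_unit iM Mm).
  have -> : m = 1 - r * x by rewrite E addrK.
  exact: h.
apply: nMx; apply: (Mmax I') => //.
  by move=> y My; exists y, 0; rewrite mul0r addr0.
by exists 0, 1; rewrite add0r mul1r.
Qed.

Lemma J_ideal : ideal_of (@whole R) J.
Proof.
split => //.
- by split => // M [[[_ M0 _ _] _] _].
- move=> x y [_ Jx] [_ Jy]; split => // M MM.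
  by case: (MM) => [[[_ _ MD _] _] _]; apply: MD; [apply: Jx|apply: Jy].
- move=> r x _ [_ Jx]; split => // M MM.
  by case: (MM) => [[[_ _ _ MI] _] _]; apply: MI => //; apply: Jx.
Qed.

Lemma J_not1 : ~ J 1.
Proof.
move=> /jacP /(_ 1); rewrite mulr1 subrr => /unitsE[y].
by rewrite mul0r => /eqP; rewrite eq_sym oner_eq0.
Qed.

Lemma J_proper : proper_ideal_of (@whole R) J.
Proof. by split; [exact: J_ideal|exact: J_not1]. Qed.

Lemma J_notU x : J x -> ~ U x.
Proof. by move=> Jx Ux; apply: J_not1; apply: (ideal_unit J_ideal Jx). Qed.

Lemma UJ_add u j : U u -> J j -> U (u + j).
Proof.
move=> Uu /jacP Jj; have [v [Uv uv]] := units_inv Uu.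
have -> : u + j = u * (1 - (- v) * j).
  by rewrite mulNr opprK mulrDr mulr1 mulrA uv mul1r.
exact: unitsM.
Qed.

Lemma J_rad x n : J (x ^+ n) -> J x.
Proof.
move=> /jacP h; apply/jacP => a.
have := h (a ^+ n); rewrite -exprMn.
have -> : 1 - (a * x) ^+ n = (1 - a * x) * (\sum_(i < n) (a * x) ^+ i).
  by rewrite -opprB subrX1 -mulNr opprB.
exact: units_factor.
Qed.


Local Notation UJ := (sunion (@units R) (@jacobson R)).

Lemma dI I : proper_ideal_of (@whole R) I -> subring (sunion U I) ->
  sameset I J.
Proof.
move=> [[_ I0 ID IM] I1] sUI x; split => [Ix|Jx].
  apply/jacP => a; case: (sUI) => S1 SB _.
  have : sunion U I (1 - a * x) by apply: SB; [left; exact: units1|right; apply: IM].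
  case=> // h; exfalso; apply: I1; rewrite -(subrK (a * x) 1).
  by apply: ID => //; apply: IM.
have U1 : U (1 + x) by have := (jacP x).1 Jx (-1); rewrite mulN1r opprK.
case: (sUI) => S1 SB _.
have : sunion U I ((1 + x) - 1) by apply: SB; [left|left; exact: units1].
by rewrite addrC addKr => -[/(J_notU Jx)|].
Qed.

Lemma c_a : subring UJ -> sublocalizable R.
Proof.
move=> [_ SB _]; split; first exact: oner_neq0.
move=> u v Uu Uv; rewrite -[v]opprK; apply: SB; first by left.
by left; apply: unitsN.
Qed.

Lemma a_c : sublocalizable R -> subring UJ.
Proof.
move=> [_ h]; have [_ J0 JD JM] := J_ideal.
have JN x : J x -> J (- x) by move=> Jx; rewrite -mulN1r; apply: JM.
split.
- by left; exact: units1.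
- move=> x y [Ux|Jx] [Uy|Jy].
  + by apply: h => //; apply: unitsN.
  + by left; apply: UJ_add => //; apply: JN.
  + by left; rewrite addrC; apply: UJ_add => //; apply: unitsN.
  + by right; apply: JD => //; apply: JN.
- move=> x y [Ux|Jx] [Uy|Jy].
  + by left; apply: unitsM.
  + by right; apply: JM.
  + by right; rewrite mulrC; apply: JM.
  + by right; apply: JM.
Qed.

Lemma b_a : (forall u, U u -> U (1 + u) \/ J (1 + u)) -> sublocalizable R.
Proof.
move=> h; split; first exact: oner_neq0.
move=> u v Uu Uv; have [w [Uw uw]] := units_inv Uu.
have -> : u + v = u * (1 + w * v) by rewrite mulrDr mulr1 mulrA uw mul1r.
case: (h (w * v)) => [|Ub|Jb]; first exact: unitsM.
  by left; apply: unitsM.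
by right; have [_ _ _ JM] := J_ideal; apply: JM.
Qed.

Lemma a_b : sublocalizable R -> (forall u, U u -> U (1 + u) \/ J (1 + u)).
Proof. by move=> [_ h] u Uu; apply: h => //; exact: units1. Qed.

Lemma unitUJ : sameset (unit_of UJ) U.
Proof.
move=> x; split => [[_ [y [_ h]]]|Ux]; first by apply/unitsE; exists y.
have [y [Uy h]] := units_inv Ux; split; first by left.
by exists y; split => //; left.
Qed.

Lemma J_max_UJ : subring UJ -> maximal_ideal_of UJ J.
Proof.
move=> sUJ; have [_ J0 JD JM] := J_ideal; split.
  split; last exact: J_not1.
  by split => // [x Jx|r x _ Jx]; [right|apply: JM].
move=> I [[IS I0 ID IM] I1] JI x Ix.
case: (IS x Ix) => // Ux; exfalso; apply: I1.
by apply: (ideal_unit (S:=UJ) (x:=x)) => //; apply/unitUJ.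
Qed.

Lemma max_UJ_eq M : subring UJ -> maximal_ideal_of UJ M -> sameset M J.
Proof.
move=> sUJ [[iM M1] Mmax].
have MJ : forall x, M x -> J x.
  move=> x Mx; case: (iM) => MS _ _ _; case: (MS x Mx) => // Ux.
  by exfalso; apply: M1; apply: (ideal_unit iM Mx); apply/unitUJ.
move=> x; split; first exact: MJ.
by apply: Mmax => //; have [] := J_max_UJ sUJ.
Qed.

Lemma c_g : subring UJ -> local_subring UJ.
Proof.
move=> sUJ; split => //; exists J; split; first exact: J_max_UJ.
by move=> M' MM'; apply: max_UJ_eq.
Qed.

Lemma local_struct B M : local_subring B -> sameset (unit_of B) U ->
  maximal_ideal_of B M -> sameset B (sunion U M).
Proof.
move=> [sB [M0 [MM0 uniq]]] EU MM x; split => [Bx|[Ux|Mx]].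
- case: (EM (U x)) => [Ux|nUx]; first by left.
  have [M' [MM' M'x]] := nonunit_max sB Bx (fun h => nUx ((EU x).1 h)).
  by right; apply/(uniq _ MM); apply/(uniq _ MM').
- by have [] := (EU x).2 Ux.
- by case: MM => [[[MS _ _ _] _] _]; apply: MS.
Qed.

Lemma sameset_sym (P Q : R -> Prop) : sameset P Q -> sameset Q P.
Proof. by move=> h x; split => /h. Qed.

Lemma sameset_trans (P Q T : R -> Prop) : sameset P Q -> sameset Q T -> sameset P T.
Proof. by move=> h1 h2 x; split => [/h1/h2|/h2/h1]. Qed.

Lemma sunion_ext (P Q : R -> Prop) : sameset P Q -> sameset (sunion U P) (sunion U Q).
Proof. by move=> h x; split => -[?|/h ?]; [left|right|left|right]. Qed.


Lemma f_UJ B : f_prop B ->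
  sameset B UJ /\ sameset (fun x => B x /\ ~ U x) J.
Proof.
move=> [sB UB iI].
have EB : sameset B (sunion U (fun x => B x /\ ~ U x)).
  move=> x; split => [Bx|[/UB //|[]//]].
  by case: (EM (U x)) => h; [left|right].
have EI : sameset (fun x => B x /\ ~ U x) J.
  apply: dI; last exact: subring_ext EB sB.
  by split => // -[_]; apply; exact: units1.
split => //; apply: sameset_trans EB _; exact: sunion_ext.
Qed.

Lemma local_jac B M0 : local_subring B -> maximal_ideal_of B M0 ->
  sameset (jacobson_of B) M0.
Proof.
move=> [sB [M1 [MM1 uniq]]] MM0 x; split => [[_ h]|M0x].
  exact: h.
split; first by case: MM0 => [[[MS _ _ _] _] _]; apply: MS.
move=> M MM; apply/(uniq _ MM); apply/(uniq _ MM0); exact: M0x.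
Qed.

Lemma h_UJ B : h_prop B -> sameset B UJ.
Proof. by move=> [lB MJ EU]; apply: local_struct. Qed.

Lemma i_UJ B : i_prop B -> sameset B UJ.
Proof.
move=> [lB [M [MM iM]] EU]; have E := local_struct lB EU MM.
have sUM : subring (sunion U M) by apply: subring_ext E lB.1.
have EM' : sameset M J.
  apply: dI sUM; split => //; by case: MM => [[_ ?] _].
apply: sameset_trans E _; exact: sunion_ext.
Qed.

Lemma j_UJ B : j_prop B -> sameset B UJ.
Proof.
move=> [lB EU EJ]; have [sB [M0 [MM0 uniq]]] := lB.
have E := local_struct lB EU MM0.
have EM0 : sameset M0 J.
  apply: sameset_trans EJ; apply: sameset_sym; exact: local_jac.
apply: sameset_trans E _; exact: sunion_ext.
Qed.

Lemma UJ_f : subring UJ -> f_prop UJ.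
Proof.
move=> sUJ; split => //; first by move=> x Ux; left.
apply: (ideal_ext (I := J)); last exact: J_ideal.
move=> x; split => [Jx|[[Ux nU|//]]]; last by case: (nU Ux).
by split; [right|apply: J_notU].
Qed.

Lemma UJ_h : subring UJ -> h_prop UJ.
Proof. move=> sUJ; split; [exact: c_g|exact: J_max_UJ|exact: unitUJ]. Qed.

Lemma UJ_i : subring UJ -> i_prop UJ.
Proof.
move=> sUJ; split; [exact: c_g| |exact: unitUJ].
by exists J; split; [exact: J_max_UJ|exact: J_ideal].
Qed.

Lemma UJ_j : subring UJ -> j_prop UJ.
Proof.
move=> sUJ; split; [exact: c_g|exact: unitUJ|].
apply: local_jac; [exact: c_g|exact: J_max_UJ].
Qed.

End Ring.

Section Morph.
Variables (R B : comNzRingType) (f : {rmorphism R -> B}).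
Hypothesis hq : is_quotient_by_jacobson f.

Lemma map_unit a : units a -> units (f a).
Proof.
move=> /unitsE[y h]; apply/unitsE; exists (f y); by rewrite -rmorphM h rmorph1.
Qed.

Lemma lift_unit a : units (f a) -> units a.
Proof.
move=> /unitsE[y h]; have [c fc] := hq.1 y.
have Jc : jacobson (a * c - 1).
  by apply/(hq.2); rewrite rmorphB rmorphM fc h rmorph1 subrr.
have := UJ_add (units1 R) Jc; rewrite addrC subrK; exact: units_factor.
Qed.

Lemma a_k : sublocalizable R -> sublocalizable B.
Proof.
move=> [_ h]; split; first exact: oner_neq0.
move=> u v; have [a <-] := hq.1 u; have [b <-] := hq.1 v.
move=> /lift_unit Ua /lift_unit Ub.
case: (h a b Ua Ub) => [Uab|Jab]; rewrite -rmorphD.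
  by left; apply: map_unit.
right; rewrite (hq.2 _).2 //; split => // M [[[_ M0 _ _] _] _]; exact: M0.
Qed.

Lemma k_l : sublocalizable B -> unit_additive B.
Proof.
move=> [_ h] u v Uu Uv; case: (h u v Uu Uv) => [|Jx]; first by left.
right; exists 1%N; rewrite expr1.
have [a fa] := hq.1 (u + v); rewrite -fa; apply/(hq.2).
apply/jacP => r; apply: lift_unit.
rewrite rmorphB rmorphM rmorph1 fa; exact: (jacP (u + v)).1 Jx (f r).
Qed.

Lemma l_a : unit_additive B -> sublocalizable R.
Proof.
move=> h; split; first exact: oner_neq0.
move=> u v Uu Uv; case: (h (f u) (f v) (map_unit Uu) (map_unit Uv)).
  by rewrite -rmorphD => /lift_unit; left.
move=> [n]; rewrite -rmorphD -rmorphXn => /(hq.2) Jn; right.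
exact: J_rad Jn.
Qed.

End Morph.

Section Quot.
Local Open Scope quotient_scope.
Variable A : comNzRingType.
Definition Jbool : {pred A} := fun x => `[< jacobson x >].
Lemma Jbool_closed : idealr_closed Jbool.
Proof.
have [_ P0 PD PM] := J_ideal A; split.
- by apply/asboolP.
- by apply/asboolP; exact: J_not1.
- move=> a u v /asboolP Pu /asboolP Pv; apply/asboolP; apply: PD => //; exact: PM.
Qed.
HB.instance Definition _ := isIdealr.Build A Jbool Jbool_closed.
Definition Qt := {ideal_quot Jbool}.
Definition piQ : A -> Qt := \pi_Qt.
Lemma piQ_zmod : zmod_morphism piQ.
Proof. by move=> x y; rewrite /piQ !piE. Qed.
Lemma piQ_mon : monoid_morphism piQ.
Proof. by split => [|x y]; rewrite /piQ !piE. Qed.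
HB.instance Definition _ := GRing.isZmodMorphism.Build A Qt piQ piQ_zmod.
HB.instance Definition _ := GRing.isMonoidMorphism.Build A Qt piQ piQ_mon.
Lemma piQ_quot : is_quotient_by_jacobson piQ.
Proof.
split; first by move=> b; exists (repr b); exact: reprK.
move=> a.
have -> : piQ a = 0 <-> piQ a = piQ 0 by rewrite rmorph0.
have := Quotient.idealrBE Jbool a 0; rewrite subr0 => E.
split.
  move=> h; have: a \in Jbool by rewrite E; apply/eqP.
  by move/asboolP.
move=> h; apply/eqP; rewrite -E; exact/asboolP.
Qed.
End Quot.
Theorem proposition9p10 (A : comNzRingType) :
  [<->
   (* (a) *) sublocalizable A;
   (* (b) *) (forall u : A, units u -> units (1 + u) \/ jacobson (1 + u));
   (* (c) *) subring (sunion (@units A) (@jacobson A));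
   (* (d) *) (exists I : A -> Prop, proper_ideal_of (@whole A) I /\ subring (sunion (@units A) I));
   (* (e) *) [/\ proper_ideal_of (@whole A) (@jacobson A),
                 subring (sunion (@units A) (@jacobson A))
               & forall I : A -> Prop, proper_ideal_of (@whole A) I ->
                   subring (sunion (@units A) I) -> sameset I (@jacobson A)];
   (* (f) *) (exists B : A -> Prop, f_prop B);
   (* (g) *) local_subring (sunion (@units A) (@jacobson A));
   (* (h) *) (exists B : A -> Prop, h_prop B);
   (* (i) *) (exists B : A -> Prop, i_prop B);
   (* (j) *) (exists B : A -> Prop, j_prop B);
   (* (k) *) (forall (B : comNzRingType) (f : {rmorphism A -> B}),
                is_quotient_by_jacobson f -> sublocalizable B);
   (* (l) *) (forall (B : comNzRingType) (f : {rmorphism A -> B}),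
                is_quotient_by_jacobson f -> unit_additive B)]
  /\
  [/\ (* parenthetical of (f) *)
      (forall B : A -> Prop, f_prop B ->
         sameset B (sunion (@units A) (@jacobson A)) /\
         sameset (fun x => B x /\ ~ units x) (@jacobson A)),
      (* parenthetical of (g) *)
      (local_subring (sunion (@units A) (@jacobson A)) ->
         maximal_ideal_of (sunion (@units A) (@jacobson A)) (@jacobson A) /\
         sameset (unit_of (sunion (@units A) (@jacobson A))) (@units A)),
      (* uniqueness in (h) *)
      (forall B1 B2 : A -> Prop, h_prop B1 -> h_prop B2 -> sameset B1 B2),
      (* uniqueness in (i) *)
      (forall B1 B2 : A -> Prop, i_prop B1 -> i_prop B2 -> sameset B1 B2)
    & (* uniqueness in (j) *)
      (forall B1 B2 : A -> Prop, j_prop B1 -> j_prop B2 -> sameset B1 B2)].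
Proof.
set c := subring (sunion (@units A) (@jacobson A)).
have Ea : sublocalizable A <-> c by split; [exact: a_c|exact: c_a].
have Eb : (forall u : A, units u -> units (1 + u) \/ jacobson (1 + u)) <-> c.
  by split => [/b_a/a_c|/c_a/a_b].
have Ed : (exists I : A -> Prop, proper_ideal_of (@whole A) I /\ subring (sunion (@units A) I)) <-> c.
  split => [[I [PI sUI]]|sc]; last by exists (@jacobson A); split => //; exact: J_proper.
  by rewrite /c; apply: (subring_ext _ sUI); apply: sunion_ext; apply: dI.
have Ee : [/\ proper_ideal_of (@whole A) (@jacobson A),
                 subring (sunion (@units A) (@jacobson A))
               & forall I : A -> Prop, proper_ideal_of (@whole A) I ->
                   subring (sunion (@units A) I) -> sameset I (@jacobson A)] <-> c.
  split => [[]//|sc]; split => //; [exact: J_proper|exact: dI].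
have Ef : (exists B : A -> Prop, f_prop B) <-> c.
  split => [[B fB]|sc]; last by exists (sunion (@units A) (@jacobson A)); exact: UJ_f.
  have [EB _] := f_UJ fB; case: fB => sB _ _; rewrite /c; exact: subring_ext EB sB.
have Eg : local_subring (sunion (@units A) (@jacobson A)) <-> c.
  by split => [[]//|]; exact: c_g.
have Eh : (exists B : A -> Prop, h_prop B) <-> c.
  split => [[B hB]|sc]; last by exists (sunion (@units A) (@jacobson A)); exact: UJ_h.
  have EB := h_UJ hB; case: hB => [[sB _] _ _]; rewrite /c; exact: subring_ext EB sB.
have Ei : (exists B : A -> Prop, i_prop B) <-> c.
  split => [[B hB]|sc]; last by exists (sunion (@units A) (@jacobson A)); exact: UJ_i.
  have EB := i_UJ hB; case: hB => [[sB _] _ _]; rewrite /c; exact: subring_ext EB sB.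
have Ej : (exists B : A -> Prop, j_prop B) <-> c.
  split => [[B hB]|sc]; last by exists (sunion (@units A) (@jacobson A)); exact: UJ_j.
  have EB := j_UJ hB; case: hB => [[sB _] _ _]; rewrite /c; exact: subring_ext EB sB.
have Ek : (forall (B : comNzRingType) (f : {rmorphism A -> B}),
                is_quotient_by_jacobson f -> sublocalizable B) <-> c.
  split => [h|sc B f hf]; last exact: (a_k hf (Ea.2 sc)).
  apply: Ea.1; have hq := piQ_quot A.
  exact: (l_a hq (k_l hq (h _ _ hq))).
have El : (forall (B : comNzRingType) (f : {rmorphism A -> B}),
                is_quotient_by_jacobson f -> unit_additive B) <-> c.
  split => [h|sc B f hf]; last exact: (k_l hf (a_k hf (Ea.2 sc))).
  apply: Ea.1; have hq := piQ_quot A; exact: (l_a hq (h _ _ hq)).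
split.
  tfae.
  - by move/Ea/Eb.
  - by move/Eb.
  - by move=> ?; apply/Ed.
  - by move/Ed/Ee.
  - by move/Ee/Ef.
  - by move/Ef/Eg.
  - by move/Eg/Eh.
  - by move/Eh/Ei.
  - by move/Ei/Ej.
  - by move/Ej/Ek.
  - by move/Ek/El.
  - by move/El/Ea.
split.
- move=> B fB; exact: f_UJ.
- move=> /Eg sc; split; [exact: J_max_UJ|exact: unitUJ].
- move=> B1 B2 h1 h2; have E1 := h_UJ h1; have E2 := h_UJ h2; apply: sameset_trans E1 (sameset_sym E2).
- move=> B1 B2 h1 h2; have E1 := i_UJ h1; have E2 := i_UJ h2; apply: sameset_trans E1 (sameset_sym E2).
- move=> B1 B2 h1 h2; have E1 := j_UJ h1; have E2 := j_UJ h2; apply: sameset_trans E1 (sameset_sym E2).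
Qed.
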